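(* Consider a distributed index coding problem with $n$ messages, side-information sets $A_1,\dots,A_n$, and server capacities $\mathbf C=(C_J:J\in N)$. Let $U=\mathrm{cl}(\emptyset)$, and let $V\subseteq[n]\setminus U$ be a set of minimum cardinality with $\mathrm{cl}(U\cup V)=[n]$. Assume $V$ satisfies Condition 1, namely $V\subseteq\mathrm{cl}([n]\setminus V)$. Then every rate tuple $\mathbf R=(R_1,\dots,R_n)$ in the capacity region satisfies \[ \sum_{i\in[n]}R_i\le \sum_{J\in N}C_J+\sum_{J\in N:\ J\cap V\neq\emptyset,\ J\not\subseteq U\cup V}C_J . \]
   Context: A distributed index coding problem has $n$ messages $x_i\in\{0,1\}^{t_i}$ and $2^n-1$ servers, one for each $J\in N=\{J\subseteq[n]:J\neq\emptyset\}$. Server $J$ has access to $x(J)=(x_i:i\in J)$ and is connected to all receivers by a noiseless broadcast link of capacity $C_J\ge 0$. Receiver $i\in[n]$ wants $x_i$ and knows $x(A_i)$ for some $A_i\subseteq[n]\setminus\{i\}$. A $(\mathbf t,\mathbf r)$ distributed index code consists of encoders $\phi_J:\prod_{j\in J}\{0,1\}^{t_j}\to\{0,1\}^{r_J}$ and decoders $\psi_i$ mapping $(\phi_J(x(J)),J\in N)$ and $x(A_i)$ to $\hat x_i$. The messages $X_i$ are independent and uniform. A tuple $(\mathbf R,\mathbf C)$ is achievable if for every $\epsilon>0$ there exist a $(\mathbf t,\mathbf r)$ code and an integer $r$ with $R_i\le t_i/r$ for all $i$, $C_J\ge r_J/r$ for all $J$, and $\Pr\{(\hat X_1,\dots,\hat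 X_n)\neq(X_1,\dots,X_n)\}\le\epsilon$. The capacity region for given $\mathbf C$ is the closure of the set of $\mathbf R$ such that $(\mathbf R,\mathbf C)$ is achievable. For $T\subseteq[n]$, $\mathrm{cl}(T)$ is the smallest set $S\supseteq T$ such that for every $i\in[n]$ with $A_i\subseteq S$ we have $i\in S$. This is the set of messages recoverable from all server outputs together with $x(T)$ by repeatedly applying the receivers' decoding rules. A set $V$ satisfies Condition 1 if $V\subseteq\mathrm{cl}([n]\setminus V)$. If several minimum sets $V$ exist, the bound holds for each one that satisfies Condition 1. *)

(* Defs.v *)
From HB Require Import structures.
From mathcomp Require Import all_boot all_order all_algebra.
Set Implicit Arguments. Unset Strict Implicit. Unset Printing Implicit Defensive.
Import Order.TTheory GRing.Theory Num.Theory.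
Local Open Scope ring_scope.

Section DIC.
Variable n : nat.
Variable A : 'I_n -> {set 'I_n}.

Definition dic_closed (S : {set 'I_n}) : bool :=
  [forall i : 'I_n, (A i \subset S) ==> (i \in S)].

Definition cl (T : {set 'I_n}) : {set 'I_n} :=
  \bigcap_(S : {set 'I_n} | (T \subset S) && dic_closed S) S.

Definition msg (t : 'I_n -> nat) := {dffun forall i : 'I_n, (t i).-tuple bool}.

(* A (t, r) distributed index code: server J's encoder depends only on x(J);
   receiver i's decoder sees all server outputs and depends on the messages
   only through x(A_i). Servers are indexed by all subsets; the empty set is
   forced to have r = 0 in [achievable] (and its output is constant anyway). *)
Record dcode (t : 'I_n -> nat) (r : {set 'I_n} -> nat) := DCode {
  enc : forall J : {set 'I_n}, msg t -> (r J).-tuple bool;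
  dec : forall i : 'I_n, (forall J : {set 'I_n}, (r J).-tuple bool) ->
        msg t -> (t i).-tuple bool;
  enc_local : forall (J : {set 'I_n}) (x y : msg t),
      (forall j, j \in J -> x j = y j) -> enc J x = enc J y;
  dec_local : forall i c (x y : msg t),
      (forall j, j \in A i -> x j = y j) -> dec i c x = dec i c y
}.

Definition derror t r (c : dcode t r) (x : msg t) : bool :=
  [exists i : 'I_n, dec c i (fun J => enc c J x) x != x i].

Definition err_prob (R : realFieldType) t r (c : dcode t r) : R :=
  (#|[set x : msg t | derror c x]|)%:R / (#|{: msg t}|)%:R.

Definition achievable (R : realFieldType) (Rt : 'I_n -> R)
    (C : {set 'I_n} -> R) : Prop :=
  forall eps : R, 0 < eps ->
    exists (t : 'I_n -> nat) (r : {set 'I_n} -> nat) (c : dcode t r) (rr : nat),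
      [/\ (0 < rr)%N, r set0 = 0%N,
          forall i, Rt i <= (t i)%:R / rr%:R,
          forall J : {set 'I_n}, J != set0 -> (r J)%:R / rr%:R <= C J
        & err_prob R c <= eps].

Definition in_capacity_region (R : realFieldType) (Rt : 'I_n -> R)
    (C : {set 'I_n} -> R) : Prop :=
  forall eps : R, 0 < eps ->
    exists Rt' : 'I_n -> R, achievable Rt' C /\ forall i, `|Rt i - Rt' i| < eps.

End DIC.

(* Main.v *)
Require Import Defs.
From HB Require Import structures.
From mathcomp Require Import all_boot all_order all_algebra.
From mathcomp Require Import zify ring lra.
From Stdlib Require Import FunctionalExtensionality.
Import Order.TTheory GRing.Theory Num.Theory.
Set Implicit Arguments. Unset Strict Implicit. Unset Printing Implicit Defensive.

Lemma cauchy_schwarz_nat (I : finType) (g : I -> nat) :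
  ((\sum_i g i) ^ 2 <= #|I| * \sum_i (g i) ^ 2)%N.
Proof.
set N := #|I|; set s := (\sum_i g i)%N.
have H : (\sum_i (2 * N * s * g i) <= \sum_i ((N * g i) ^ 2 + s ^ 2))%N.
  apply: leq_sum => i _.
  have [H1 _] := nat_Cauchy (N * g i) s.
  apply: leq_trans H1; rewrite leq_eqVlt; apply/orP; left; apply/eqP; ring.
rewrite big_split /= sum_nat_const -big_distrr -/s /= in H.
rewrite (eq_bigr (fun i => N ^ 2 * g i ^ 2)%N) in H; last by move=> i _; rewrite expnMn.
rewrite -big_distrr /= -/N in H.
case: (posnP N) => HN.
  have -> : s = 0%N.
    rewrite /s; apply: big1 => i _; exfalso.
    by move: HN; rewrite /N => /card0_eq /(_ i).
  by [].
nia.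
Qed.

Section Core.
Variables (n : nat) (A : 'I_n -> {set 'I_n}) (t : 'I_n -> nat)
  (r : {set 'I_n} -> nat) (c : dcode A t r).

Definition good (x : msg t) := ~~ derror c x.
Definition agree (x y : msg t) := [set i | x i == y i].

Lemma goodP x : good x -> forall i, dec c i (fun J => enc c J x) x = x i.
Proof. by move/existsPn => H i; apply/eqP; rewrite -[_ == _]negbK H. Qed.

Lemma cl_agree (x y : msg t) (S0 : {set 'I_n}) :
  good x -> good y -> (forall J, enc c J x = enc c J y) ->
  S0 \subset agree x y -> cl A S0 \subset agree x y.
Proof.
move=> gx gy hJ hS.
rewrite /cl; apply: (bigcap_inf (agree x y)); rewrite hS /=.
apply/forallP => i; apply/implyP => /subsetP hA.
have e : (fun J => enc c J x) = (fun J => enc c J y).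
  by apply: functional_extensionality_dep.
rewrite inE -(goodP gx) -(goodP gy) e.
apply/eqP; apply: dec_local => j /hA; by rewrite inE => /eqP.
Qed.

Lemma agree_all (x y : msg t) : setT \subset agree x y -> x = y.
Proof.
move/subsetP => H; apply/ffunP => i.
by have := H i (in_setT i); rewrite inE => /eqP.
Qed.


Variable V : {set 'I_n}.
Let U := cl A set0.
Hypotheses (hVU : V \subset ~: U) (hcl : cl A (U :|: V) = setT)
  (hc1 : V \subset cl A (~: V)).

Definition E := [set J : {set 'I_n} | (J :&: V != set0) && ~~ (J \subset U :|: V)].

Lemma agree_U x y : good x -> good y -> (forall J, enc c J x = enc c J y) ->
  U \subset agree x y.
Proof. by move=> gx gy hJ; apply: cl_agree => //; apply: sub0set. Qed.

Lemma inj1 x y : good x -> good y -> (forall J, enc c J x = enc c J y) ->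
  V \subset agree x y -> x = y.
Proof.
move=> gx gy hJ hV; apply: agree_all; rewrite -hcl.
by apply: cl_agree => //; rewrite subUset hV agree_U.
Qed.

Lemma inj2 x y : good x -> good y -> (forall J, enc c J x = enc c J y) ->
  ~: V \subset agree x y -> x = y.
Proof.
move=> gx gy hJ hV; apply: agree_all.
have hV' : V \subset agree x y.
  by apply: subset_trans hc1 _; apply: cl_agree.
by rewrite -(setUCr V) subUset hV hV'.
Qed.

Definition Yt := {dffun forall J : {set 'I_n}, (r J).-tuple bool}.
Definition Yf (x : msg t) : Yt := [ffun J => enc c J x].
Definition rE J := if J \in E then r J else 0%N.
Definition YEt := {dffun forall J : {set 'I_n}, (rE J).-tuple bool}.

Lemma ttakeP J (u : (r J).-tuple bool) : size (take (rE J) u) == rE J.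
Proof.
rewrite size_take size_tuple /rE; case: (J \in E); first by rewrite ltnn.
by case: (r J).
Qed.

Definition ttake J (u : (r J).-tuple bool) : (rE J).-tuple bool := Tuple (ttakeP u).
Definition YE (x : msg t) : YEt := [ffun J => ttake (enc c J x)].
Definition mix (x y : msg t) : msg t := [ffun i => if i \in V then x i else y i].

Lemma Yf_eq x y : Yf x = Yf y -> forall J, enc c J x = enc c J y.
Proof. by move=> e J; have := congr1 (fun f : Yt => f J) e; rewrite !ffunE. Qed.

Lemma YE_eq x y J : J \in E -> YE x = YE y -> enc c J x = enc c J y.
Proof.
move=> hE e; have := congr1 (fun f : YEt => val (f J)) e; rewrite !ffunE /=.
rewrite /rE hE !take_oversize ?size_tuple // => e'.
by apply: val_inj.
Qed.


Definition G := [set x : msg t | good x].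
Definition P := [set p : msg t * msg t | [&& good p.1, good p.2 & Yf p.1 == Yf p.2]].
Definition h (p : msg t * msg t) : msg t * YEt := (mix p.1 p.2, YE p.1).

Lemma h_inj : {in P &, injective h}.
Proof.
move=> [x1 y1] [x2 y2]; rewrite !inE /=.
move=> /and3P[g1 g1' /eqP e1] /and3P[g2 g2' /eqP e2] [em eE].
have hV i : i \in V -> x1 i = x2 i.
  by move=> Hi; have := congr1 (fun f : msg t => f i) em; rewrite !ffunE Hi.
have hNV i : i \notin V -> y1 i = y2 i.
  by move=> /negbTE Hi; have := congr1 (fun f : msg t => f i) em; rewrite !ffunE Hi.
have hU1 := agree_U g1 g1' (Yf_eq e1).
have hU2 := agree_U g2 g2' (Yf_eq e2).
have hy : y1 = y2.
  apply: inj2 g1' g2' _ _; last first.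
    by apply/subsetP => i; rewrite !inE => Hi; apply/eqP; apply: hNV.
  move=> J; case hJE: (J \in E).
    rewrite -(Yf_eq e1) -(Yf_eq e2); exact: YE_eq hJE eE.
  case hJV: (J :&: V == set0).
    apply: enc_local => j hj; apply: hNV.
    by move/eqP/setP/(_ j): hJV; rewrite !inE hj /= => ->.
  rewrite -(Yf_eq e1) -(Yf_eq e2).
  move: hJE; rewrite inE hJV /= => /negbFE /subsetP hJ.
  apply: enc_local => j hj.
  case hjV: (j \in V); first exact: hV.
  have := hJ j hj; rewrite inE hjV orbF => hjU.
  have := subsetP hU1 j hjU; rewrite inE => /eqP a1.
  have := subsetP hU2 j hjU; rewrite inE => /eqP a2.
  by rewrite a1 a2; apply: hNV; rewrite hjV.
subst y2.
have hx : x1 = x2.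
  apply: inj1 g1 g2 _ _.
    by move=> J; rewrite (Yf_eq e1) (Yf_eq e2).
  by apply/subsetP => i Hi; rewrite inE; apply/eqP; apply: hV.
by rewrite hx.
Qed.

Lemma cardP_le : (#|P| <= #|{: msg t}| * #|{: YEt}|)%N.
Proof.
rewrite -(card_in_imset h_inj) -card_prod.
exact: max_card.
Qed.


Definition gy (y : Yt) := #|[set x in G | Yf x == y]|.

Lemma cardG : #|G| = (\sum_(y : Yt) gy y)%N.
Proof.
have -> : #|G| = \sum_(x in G) 1 by rewrite sum1_card.
rewrite (partition_big Yf xpredT) //=.
apply: eq_bigr => y _; rewrite /gy.
have -> : #|[set x in G | Yf x == y]| = \sum_(x in [set x in G | Yf x == y]) 1 by rewrite sum1_card.
apply: eq_bigl => x; by rewrite !inE.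
Qed.

Lemma cardP : #|P| = (\sum_(y : Yt) gy y ^ 2)%N.
Proof.
have -> : #|P| = \sum_(x in P) 1 by rewrite sum1_card.
rewrite (partition_big (fun p : msg t * msg t => Yf p.1) xpredT) //=.
apply: eq_bigr => y _.
rewrite -mulnn /gy -cardsX.
set Z := setX _ _.
have -> : #|Z| = \sum_(x in Z) 1 by rewrite sum1_card.
apply: eq_bigl => [[a b]].
rewrite !inE /=.
case: (Yf a =P y) => [->|ne]; last by rewrite !andbF.
by rewrite !andbT eq_sym.
Qed.

Lemma cardG_sq : (#|G| ^ 2 <= #|{: Yt}| * (#|{: msg t}| * #|{: YEt}|))%N.
Proof.
rewrite cardG; apply: leq_trans (cauchy_schwarz_nat gy) _.
by rewrite leq_mul2l -cardP cardP_le orbT.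
Qed.


Lemma card_dffun_tuple (aT : finType) (f : aT -> nat) :
  #|{: {dffun forall x : aT, (f x).-tuple bool}}| = (2 ^ (\sum_x f x))%N.
Proof.
rewrite card_dep_ffun foldrE big_map big_enum /=.
rewrite (big_morph (fun k => 2 ^ k)%N (expnD 2) (expn0 2)).
by apply: eq_bigr => x _; rewrite card_tuple card_bool.
Qed.

Lemma code_bound : (4 * #|[set x | derror c x]| <= #|{: msg t}|)%N ->
  (\sum_i t i <= \sum_J r J + \sum_(J in E) r J)%N.
Proof.
move=> Hb.
have HG : (#|G| + #|[set x | derror c x]| = #|{: msg t}|)%N.
  rewrite addnC -(cardsC [set x | derror c x]); congr (_ + _)%N.
  by apply: eq_card => x; rewrite !inE.
have Hsq := cardG_sq.
rewrite /msg card_dffun_tuple in Hb HG Hsq.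
rewrite /Yt /YEt !card_dffun_tuple in Hsq.
have ->: (\sum_(J in E) r J = \sum_J rE J)%N.
  by rewrite big_mkcond; apply: eq_bigr => J _; rewrite /rE.
set T := (\sum_i t i)%N in Hb HG Hsq *.
set S := (\sum_J r J)%N in Hsq *.
set SE := (\sum_J rE J)%N in Hsq *.
rewrite leqNgt; apply/negP => HT.
have HK : (2 * 2 ^ (S + SE) <= 2 ^ T)%N by rewrite -expnS leq_pexp2l.
have HK0 : (0 < 2 ^ (S + SE))%N by rewrite expn_gt0.
rewrite expnD in HK HK0.
move: HK HK0 Hb HG Hsq.
set M := (2 ^ T)%N; set a := (2 ^ S)%N; set b := (2 ^ SE)%N.
set g := #|G|; set bad := #|_|.
move=> HK HK0 Hb HG Hsq.
have Hab : (0 < a * b)%N by [].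
nia.
Qed.

End Core.

Unset Implicit Arguments. Set Strict Implicit.
Local Open Scope ring_scope.

Theorem theorem2 (R : realFieldType) (n : nat) (A : 'I_n -> {set 'I_n})
    (hA : forall i, i \notin A i)
    (C : {set 'I_n} -> R) (hC : forall J : {set 'I_n}, J != set0 -> 0 <= C J)
    (V : {set 'I_n}) :
  let U := cl A set0 in
  V \subset ~: U ->
  cl A (U :|: V) = setT ->
  (forall W : {set 'I_n}, W \subset ~: U -> cl A (U :|: W) = setT ->
     (#|V| <= #|W|)%N) ->
  V \subset cl A (~: V) ->
  forall Rt : 'I_n -> R, in_capacity_region A Rt C ->
    \sum_(i : 'I_n) Rt i <=
      \sum_(J : {set 'I_n} | J != set0) C J
      + \sum_(J : {set 'I_n} | (J :&: V != set0) && ~~ (J \subset U :|: V)) C J.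
Proof.
move=> U hVU hcl hmin hc1 Rt HR.
set B := (X in _ <= X).
apply/ler_addgt0Pr => e he.
set d := e / (n%:R + 1).
have hn1 : 0 < n%:R + 1 :> R by rewrite ltr_wpDl.
have hd : 0 < d by rewrite divr_gt0.
have [Rt' [Hach Hclose]] := HR d hd.
have q0 : 0 < 1/4 :> R by rewrite divr_gt0.
have [t [r [c [rr [hrr hr0 hRt hCr herr]]]]] := Hach (1/4) q0.
have H4 : (4 * #|[set x | derror c x]| <= #|{: msg t}|)%N.
  have hM : 0 < (#|{: msg t}|)%:R :> R.
    by rewrite ltr0n /msg card_dffun_tuple expn_gt0.
  move: herr; rewrite /err_prob ler_pdivrMr // => h.
  rewrite -(ler_nat R) natrM.
  lra.
have hsum := code_bound hVU hcl hc1 H4.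
have S1 : \sum_i Rt i <= \sum_i Rt' i + n%:R * d.
  apply: (@le_trans _ _ (\sum_i (Rt' i + d))).
    apply: ler_sum => i _; have := Hclose i; have := ler_norm (Rt i - Rt' i); lra.
  by rewrite big_split /= sumr_const card_ord mulr_natl.
have S2 : \sum_i Rt' i <= (\sum_i t i)%:R / rr%:R.
  rewrite natr_sum mulr_suml; apply: ler_sum => i _; exact: hRt.
have hrr' : 0 <= rr%:R^-1 :> R by rewrite invr_ge0 ler0n.
have S3 : (\sum_i t i)%:R / rr%:R <=
    (\sum_J r J)%:R / rr%:R + (\sum_(J in E A V) r J)%:R / rr%:R :> R.
  by rewrite -mulrDl -natrD ler_wpM2r // ler_nat.
have S4 : (\sum_J r J)%:R / rr%:R <= \sum_(J | J != set0) C J.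
  rewrite natr_sum mulr_suml (bigD1 set0) //= hr0 mul0r add0r.
  by apply: ler_sum => J HJ; exact: hCr.
have S5 : (\sum_(J in E A V) r J)%:R / rr%:R <=
    \sum_(J | (J :&: V != set0) && ~~ (J \subset U :|: V)) C J.
  rewrite natr_sum mulr_suml.
  rewrite (eq_bigl (fun J => (J :&: V != set0) && ~~ (J \subset U :|: V))); last first.
    by move=> J; rewrite inE.
  apply: ler_sum => J /andP[HJ _]; apply: hCr.
  by apply: contraNneq HJ => ->; rewrite set0I.
have S6 : n%:R * d <= e.
  rewrite /d mulrA ler_pdivrMr // mulrDr mulr1 mulrC lerDl ltW //.
rewrite /B; lra.
Qed.
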